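(* Let $A\in\mathbb{R}^{nm\times nm}$ be symmetric with eigenvalues $\lambda_1\le\lambda_2\le\dots\le\lambda_{nm}$, let $x=\operatorname{vec}(X)$ with $\|x\|=1$ and thin SVD $X=USV^\top$ ($U^\top U=I_r$, $V^\top V=I_r$, $S$ diagonal positive), and let $C=A-\mathfrak{R}(x)I_{nm}$ with $\mathfrak{R}(x)=x^\top Ax$. Then for every nonzero $\tau\in\mathbb{R}^{nr+mr+r^2}$ with $B^\top\tau=0$: (i) $z=E\tau$ is nonzero, orthogonal to $x$, satisfies $\|z\|=\|\tau\|$, and $\tau^\top C_{\mathrm{loc}}\tau=z^\top Cz$; consequently \[ \frac{\tau^\top C_{\mathrm{loc}}\tau}{\tau^\top\tau}\in\Big[\min_{z\perp x,\,z\ne0}\frac{z^\top Cz}{z^\top z},\ \max_{z\perp x,\,z\ne0}\frac{z^\top Cz}{z^\top z}\Big]; \] (ii) $\tau^\top C_{\mathrm{loc}}\tau\ge(\lambda_1+\lambda_2-2\mathfrak{R}(x))\,\|\tau\|^2$. In particular, if $\mathfrak{R}(x)<(\lambda_1+\lambda_2)/2$, then $C_{\mathrm{loc}}$ is positive definite on the subspace $\{\tau: B^\top\tau=0\}$, and the condition number of $(I-BB^\top)C_{\mathrm{loc}}(I-BB^\top)$ restricted to this subspace is at most $\dfrac{\max_{z\perp x,z\ne0} z^\top Cz/z^\top z}{\min_{z\perp x,z\ne0} z^\top Cz/z^\top z}$.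
   Context: $\operatorname{vec}$ is columnwise reshaping. Define $E_v=V\otimes I_n$, $E_u=I_m\otimes U$, $E_{vu}=V\otimes U$, the $nm\times(nr+mr+r^2)$ matrix $E=[E_v\ E_u\ E_{vu}]$ (so $E\,(\operatorname{vec}(U_z),\operatorname{vec}(V_z^\top),\operatorname{vec}(S_z))=\operatorname{vec}(U_zV^\top+UV_z^\top+US_zV^\top)$), and for $M\in\mathbb{R}^{nm\times nm}$, $a,b\in\{v,u,vu\}$, $M_{a,b}=E_a^\top ME_b$. The local matrix is $C_{\mathrm{loc}}=E^\top CE=[C_{a,b}]_{a,b\in\{v,u,vu\}}$. Further \[ B=\begin{bmatrix} I_r\otimes U&0&0\\ 0&V\otimes I_r&0\\ 0&0&\operatorname{vec}(S)\end{bmatrix}, \] so that for $\tau=(\operatorname{vec}(U_z),\operatorname{vec}(V_z^\top),\operatorname{vec}(S_z))$ the condition $B^\top\tau=0$ means $U^\top U_z=0$, $V^\top V_z=0$, $\operatorname{vec}(S)^\top\operatorname{vec}(S_z)=0$. *)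

(* Defs.v *)
From HB Require Import structures.
From mathcomp Require Import all_boot all_order all_algebra.
Set Implicit Arguments. Unset Strict Implicit. Unset Printing Implicit Defensive.
Import Order.TTheory GRing.Theory Num.Theory.
Local Open Scope ring_scope.

Section Defs.
Variable R : rcfType.

(* Index splitting for 'I_(p*q): k <-> (k1,k2) with k = k1*q + k2
   (this is MathComp's mxvec_index ordering). *)
Definition split_idx (p q : nat) (k : 'I_(p * q)) : 'I_p * 'I_q :=
  enum_val (cast_ord (esym (mxvec_cast p q)) k).

(* Kronecker product: (P (x) Q)_{(i1 p2 + i2),(j1 q2 + j2)} = P_{i1 j1} Q_{i2 j2}. *)
Definition kron (p1 q1 p2 q2 : nat) (P : 'M[R]_(p1, q1)) (Q : 'M[R]_(p2, q2))
  : 'M[R]_(p1 * p2, q1 * q2) :=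
  \matrix_(i, j) (P (split_idx i).1 (split_idx j).1 * Q (split_idx i).2 (split_idx j).2).

(* Columnwise vectorization: vec X at index j*n + i is X i j. *)
Definition vec (n m : nat) (X : 'M[R]_(n, m)) : 'cV[R]_(m * n) := (mxvec X^T)^T.

Definition dot (k : nat) (u v : 'cV[R]_k) : R := (u^T *m v) 0 0.
Definition qform (k : nat) (M : 'M[R]_k) (v : 'cV[R]_k) : R := (v^T *m M *m v) 0 0.
Definition vnorm (k : nat) (v : 'cV[R]_k) : R := Num.sqrt (dot v v).

Definition is_min_rq (k : nat) (C : 'M[R]_k) (x : 'cV[R]_k) (lo : R) : Prop :=
  (exists2 z : 'cV[R]_k, (z != 0) && (dot z x == 0) & qform C z / dot z z = lo) /\
  (forall z : 'cV[R]_k, z != 0 -> dot z x = 0 -> lo <= qform C z / dot z z).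
Definition is_max_rq (k : nat) (C : 'M[R]_k) (x : 'cV[R]_k) (hi : R) : Prop :=
  (exists2 z : 'cV[R]_k, (z != 0) && (dot z x == 0) & qform C z / dot z z = hi) /\
  (forall z : 'cV[R]_k, z != 0 -> dot z x = 0 -> qform C z / dot z z <= hi).

Definition restr_eig (k l : nat) (M : 'M[R]_k) (W : 'M[R]_(k, l)) (mu : R) : Prop :=
  exists2 t : 'cV[R]_k, (t != 0) && (W^T *m t == 0) & M *m t = mu *: t.

Definition is_restr_cond (k l : nat) (M : 'M[R]_k) (W : 'M[R]_(k, l)) (kappa : R) : Prop :=
  exists mumin mumax, [/\ restr_eig M W mumin, restr_eig M W mumax,
     (forall mu, restr_eig M W mu -> mumin <= mu <= mumax) & kappa = mumax / mumin].

End Defs.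

(* Main.v *)
Require Import Defs.
From HB Require Import structures.
From mathcomp Require Import all_boot all_order all_algebra.
From mathcomp Require Import ring lra.
Import Order.TTheory GRing.Theory Num.Theory.
Local Open Scope ring_scope.
Set Implicit Arguments. Unset Strict Implicit. Unset Printing Implicit Defensive.
Section H.
Variable R : rcfType.

Lemma split_mxvec p q (i : 'I_p) (j : 'I_q) : split_idx (mxvec_index i j) = (i, j).
Proof. by rewrite /split_idx /mxvec_index cast_ordK enum_rankK. Qed.

Lemma vecE n m (Y : 'M[R]_(n, m)) i j : vec Y (mxvec_index j i) 0 = Y i j.
Proof. by rewrite /vec mxE mxvecE mxE. Qed.

Lemma kronE p1 q1 p2 q2 (P : 'M[R]_(p1, q1)) (Q : 'M[R]_(p2, q2)) i1 i2 j1 j2 :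
  kron P Q (mxvec_index i1 i2) (mxvec_index j1 j2) = P i1 j1 * Q i2 j2.
Proof. by rewrite /kron mxE !split_mxvec. Qed.

Lemma kron_vec p1 q1 p2 q2 (P : 'M[R]_(p1, q1)) (Q : 'M[R]_(p2, q2)) (Y : 'M[R]_(q2, q1)) :
  kron P Q *m vec Y = vec (Q *m Y *m P^T).
Proof.
apply/colP => k; case/mxvec_indexP: k => i1 i2.
rewrite vecE !mxE (reindex _ (curry_mxvec_bij _ _)) /=.
transitivity (\sum_j1 \sum_j2 kron P Q (mxvec_index i1 i2) (mxvec_index j1 j2) * vec Y (mxvec_index j1 j2) 0).
  by rewrite pair_bigA; apply: eq_bigr => -[a b] _.
apply: eq_bigr => j1 _.
rewrite !mxE mulr_suml; apply: eq_bigr => j2 _.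
by rewrite kronE vecE ?mxE; ring.
Qed.

Lemma trmx_kron p1 q1 p2 q2 (P : 'M[R]_(p1, q1)) (Q : 'M[R]_(p2, q2)) :
  (kron P Q)^T = kron P^T Q^T.
Proof.
apply/matrixP => k l; case/mxvec_indexP: k => i1 i2; case/mxvec_indexP: l => j1 j2.
by rewrite mxE !kronE !mxE.
Qed.

Lemma dotE k (u v : 'cV[R]_k) : dot u v = \sum_i u i 0 * v i 0.
Proof. by rewrite /dot mxE; apply: eq_bigr => i _; rewrite mxE. Qed.

Lemma dot_vec n m (Y Z : 'M[R]_(n, m)) : dot (vec Y) (vec Z) = \tr (Y^T *m Z).
Proof.
rewrite dotE (reindex _ (curry_mxvec_bij _ _)) /=.
transitivity (\sum_j \sum_i vec Y (mxvec_index j i) 0 * vec Z (mxvec_index j i) 0).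
  by rewrite pair_bigA; apply: eq_bigr => -[a b] _.
apply: eq_bigr => j _; rewrite !mxE; apply: eq_bigr => i _.
by rewrite !vecE !mxE.
Qed.

Lemma vecD n m (Y Z : 'M[R]_(n, m)) : vec (Y + Z) = vec Y + vec Z.
Proof. by rewrite /vec !linearD. Qed.

Lemma vec_inj n m : injective (@vec R n m).
Proof.
move=> Y Z /(congr1 trmx); rewrite /vec !trmxK => /(congr1 vec_mx).
by rewrite !mxvecK => /(congr1 trmx); rewrite !trmxK.
Qed.

Lemma vec_surj n m (v : 'cV[R]_(m * n)) : v = vec (vec_mx v^T)^T.
Proof. by rewrite /vec trmxK vec_mxK trmxK. Qed.

Lemma vec0 n m : vec (0 : 'M[R]_(n, m)) = 0.
Proof. by rewrite /vec !linear0. Qed.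


Section Dot.
Variable k : nat.
Implicit Types u v w : 'cV[R]_k.

Lemma dotC u v : dot u v = dot v u.
Proof. by rewrite !dotE; apply: eq_bigr => i _; rewrite mulrC. Qed.
Lemma dotDl u v w : dot (u + v) w = dot u w + dot v w.
Proof. by rewrite !dotE -big_split; apply: eq_bigr => i _; rewrite mxE mulrDl. Qed.
Lemma dotDr u v w : dot w (u + v) = dot w u + dot w v.
Proof. by rewrite !(dotC w) dotDl. Qed.
Lemma dotZl a u v : dot (a *: u) v = a * dot u v.
Proof. by rewrite !dotE mulr_sumr; apply: eq_bigr => i _; rewrite mxE mulrA. Qed.
Lemma dotZr a u v : dot v (a *: u) = a * dot v u.
Proof. by rewrite !(dotC v) dotZl. Qed.
Lemma dotNl u v : dot (- u) v = - dot u v.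
Proof. by rewrite -scaleN1r dotZl mulN1r. Qed.
Lemma dotNr u v : dot v (- u) = - dot v u.
Proof. by rewrite !(dotC v) dotNl. Qed.
Lemma dotBl u v w : dot (u - v) w = dot u w - dot v w.
Proof. by rewrite dotDl dotNl. Qed.
Lemma dotBr u v w : dot w (u - v) = dot w u - dot w v.
Proof. by rewrite dotDr dotNr. Qed.
Lemma dot_ge0 u : 0 <= dot u u.
Proof. by rewrite dotE; apply: sumr_ge0 => i _; rewrite -expr2 sqr_ge0. Qed.
Lemma dot_eq0 u : dot u u = 0 -> u = 0.
Proof.
rewrite dotE => H; apply/colP => i; rewrite mxE.
have hge : forall j : 'I_k, xpredT j -> 0 <= u j 0 * u j 0 by move=> j _; rewrite -expr2 sqr_ge0.
have := psumr_eq0P hge H (i:=i) isT.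
by move/eqP; rewrite mulf_eq0 orbb => /eqP.
Qed.
Lemma dot_gt0 u : u != 0 -> 0 < dot u u.
Proof.
move=> nz; rewrite lt_def dot_ge0 andbT; apply/eqP => /dot_eq0 h.
by rewrite h eqxx in nz.
Qed.
Lemma dot_delta u (i : 'I_k) : dot u (delta_mx i 0) = u i 0.
Proof. by rewrite /dot -colE !mxE. Qed.

Lemma cauchy_schwarz u v : dot u v ^+ 2 <= dot u u * dot v v.
Proof.
have [h|h] := eqVneq (dot u u) 0.
  by rewrite (dot_eq0 h) /dot !linear0 mul0mx !mxE expr0n /= mul0r.
have hp : 0 < dot u u by rewrite lt_def h dot_ge0.
have := dot_ge0 (dot u u *: v - dot u v *: u).
rewrite !(dotBl, dotBr, dotZl, dotZr) (dotC v u) => H.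
have : 0 <= dot u u * (dot u u * dot v v - dot u v ^+ 2) by nra.
by rewrite pmulr_rge0 // subr_ge0.
Qed.
End Dot.

Lemma kyfan_core k (lam : seq R) (a b : 'cV[R]_k) :
  (2 <= k)%N -> size lam = k -> sorted <=%R lam -> dot a a = 1 -> dot a b = 0 ->
  (lam`_0 + lam`_1) * dot b b <= \sum_(i < k) lam`_i * (a i 0 ^+ 2 * dot b b + b i 0 ^+ 2).
Proof.
move=> k2 sz so haa hab.
set be := dot b b.
have beg : 0 <= be := dot_ge0 b.
pose c (i : 'I_k) := a i 0 ^+ 2 * be + b i 0 ^+ 2.
have cge (i : 'I_k) : 0 <= c i.
  by rewrite /c; have := sqr_ge0 (a i 0); have := sqr_ge0 (b i 0); nra.
have cle (i : 'I_k) : c i <= be.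
  pose f := delta_mx i 0 - a i 0 *: a.
  have := cauchy_schwarz b f.
  rewrite /f !(dotBl, dotBr, dotZl, dotZr) !dot_delta (dotC b a) hab haa.
  rewrite (dotC (delta_mx i 0) a) dot_delta /= -/be.
  rewrite mxE eqxx /= => H.
  rewrite /c; nra.
have sumc : \sum_i c i = 2 * be.
  rewrite /c big_split /= -mulr_suml.
  have -> : \sum_i a i 0 ^+ 2 = 1 by rewrite -haa dotE; apply: eq_bigr => i _; rewrite expr2.
  have -> : \sum_i b i 0 ^+ 2 = be by rewrite /be dotE; apply: eq_bigr => i _; rewrite expr2.
  by rewrite mul1r mulr2n mulrDl mul1r.
have k0 : (0 < k)%N by apply: leq_trans k2.
pose i0 := Ordinal k0.
rewrite (bigD1 i0) //=.
have lamle (i : 'I_k) : i != i0 -> lam`_1 <= lam`_i.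
  move=> ne; apply: (sorted_leq_nth le_trans lexx) => //.
  - by rewrite inE sz.
  - by rewrite inE sz.
  by rewrite lt0n; apply: contra ne => /eqP h; apply/eqP/val_inj.
have H1 : \sum_(i | i != i0) lam`_1 * c i <= \sum_(i | i != i0) lam`_i * c i.
  by apply: ler_sum => i ne; apply: ler_wpM2r; [exact: cge | exact: lamle].
rewrite -mulr_sumr in H1.
have H2 : \sum_(i | i != i0) c i = 2 * be - c i0.
  by rewrite -sumc [in RHS](bigD1 i0) //= addrAC subrr add0r.
rewrite H2 in H1.
have := cle i0; have := cge i0.
have l01 : lam`_0 <= lam`_1.
  apply: (sorted_leq_nth le_trans lexx) => //; by rewrite inE sz.
rewrite /c => c1 c2; rewrite /c in H1.
have e : i0 = i0 :> 'I_k by [].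
simpl in *; nra.
Qed.


Lemma qform_diag k (Q : 'M[R]_k) (d : 'rV[R]_k) v :
  qform (Q *m diag_mx d *m Q^T) v = \sum_i d 0 i * (Q^T *m v) i 0 ^+ 2.
Proof.
rewrite /qform.
have -> : v^T *m (Q *m diag_mx d *m Q^T) *m v = (Q^T *m v)^T *m diag_mx d *m (Q^T *m v).
  by rewrite trmx_mul trmxK !mulmxA.
rewrite mxE; apply: eq_bigr => i _; rewrite mul_mx_diag !mxE; ring.
Qed.

Lemma dotQ k (Q : 'M[R]_k) u v : Q *m Q^T = 1%:M -> dot (Q^T *m u) (Q^T *m v) = dot u v.
Proof. by move=> h; rewrite /dot trmx_mul trmxK !mulmxA -(mulmxA u^T) h mulmx1. Qed.

Lemma qform_sub k (A : 'M[R]_k) c w : qform (A - c%:M) w = qform A w - c * dot w w.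
Proof.
by rewrite /qform /dot mulmxBr mulmxBl mul_mx_scalar -scalemxAl !mxE.
Qed.

Lemma kyfan k (A Q : 'M[R]_k) (lam : seq R) x w :
  (2 <= k)%N -> size lam = k -> sorted <=%R lam -> Q^T *m Q = 1%:M ->
  A = Q *m diag_mx (\row_i lam`_i) *m Q^T -> dot x x = 1 -> dot w x = 0 ->
  (lam`_0 + lam`_1 - 2 * qform A x) * dot w w <= qform (A - (qform A x)%:M) w.
Proof.
move=> k2 sz so hQ hA hx hw.
have hQ' : Q *m Q^T = 1%:M by apply: mulmx1C.
have := kyfan_core (a:=Q^T *m x) (b:=Q^T *m w) k2 sz so.
rewrite !dotQ // hx dotC hw => /(_ erefl erefl) H.
rewrite qform_sub.
have eA v : qform A v = \sum_(i < k) lam`_i * (Q^T *m v) i 0 ^+ 2.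
  by rewrite hA qform_diag; apply: eq_bigr => i _; rewrite mxE.
move: H; rewrite !eA.
under eq_bigr do rewrite mulrDr.
rewrite big_split /=.
have -> : \sum_(i < k) lam`_i * ((Q^T *m x) i 0 ^+ 2 * dot w w) =
  (\sum_(i < k) lam`_i * (Q^T *m x) i 0 ^+ 2) * dot w w.
  by rewrite mulr_suml; apply: eq_bigr => i _; rewrite mulrA.
move=> H; nra.
Qed.


Lemma dot_col p q (a c : 'cV[R]_p) (b d : 'cV[R]_q) :
  dot (col_mx a b) (col_mx c d) = dot a c + dot b d.
Proof. by rewrite /dot tr_col_mx mul_row_col mxE. Qed.

Lemma tr_sym p q (Y Z : 'M[R]_(p, q)) : \tr (Y^T *m Z) = \tr (Z^T *m Y).
Proof. by rewrite -mxtrace_tr trmx_mul trmxK. Qed.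

Lemma dot_vecC n m (Y Z : 'M[R]_(n, m)) : dot (vec Y) (vec Z) = dot (vec Z) (vec Y).
Proof. exact: dotC. Qed.

Section Parts.
Variables (n m r : nat) (U : 'M[R]_(n, r)) (V : 'M[R]_(m, r)).
Variables (Uz : 'M[R]_(n, r)) (Vzt : 'M[R]_(r, m)) (Sz S : 'M[R]_r).
Hypotheses (hU : U^T *m U = 1%:M) (hV : V^T *m V = 1%:M).
Hypotheses (h1 : U^T *m Uz = 0) (h2 : Vzt *m V = 0) (h3 : \tr (S^T *m Sz) = 0).

Let Z1 := Uz *m V^T.
Let Z2 := U *m Vzt.
Let Z3 := U *m Sz *m V^T.

Lemma trV (M : 'M[R]_r) : \tr (V *m M *m V^T) = \tr M.
Proof. by rewrite mxtrace_mulC mulmxA hV mul1mx. Qed.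

Lemma hUz : Uz^T *m U = 0.
Proof. by rewrite -(trmxK U) -trmx_mul h1 linear0. Qed.

Lemma d11 : dot (vec Z1) (vec Z1) = dot (vec Uz) (vec Uz).
Proof.
by rewrite !dot_vec /Z1 trmx_mul trmxK !mulmxA -(mulmxA V) trV.
Qed.
Lemma d22 : dot (vec Z2) (vec Z2) = dot (vec Vzt) (vec Vzt).
Proof. by rewrite !dot_vec /Z2 trmx_mul -mulmxA (mulmxA U^T) hU mul1mx. Qed.
Lemma d33 : dot (vec Z3) (vec Z3) = dot (vec Sz) (vec Sz).
Proof.
rewrite !dot_vec /Z3 !trmx_mul trmxK !mulmxA.
by rewrite -(mulmxA (V *m Sz^T) U^T U) hU mulmx1 -(mulmxA V Sz^T Sz) trV.
Qed.
Lemma d12 : dot (vec Z1) (vec Z2) = 0.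
Proof.
rewrite dot_vec /Z1 /Z2 !trmx_mul trmxK !mulmxA.
by rewrite -(mulmxA V Uz^T U) hUz mulmx0 mul0mx linear0.
Qed.
Lemma d13 : dot (vec Z1) (vec Z3) = 0.
Proof.
rewrite dot_vec /Z1 /Z3 !trmx_mul trmxK !mulmxA.
by rewrite -(mulmxA V Uz^T U) hUz mulmx0 !mul0mx linear0.
Qed.
Lemma d23 : dot (vec Z2) (vec Z3) = 0.
Proof.
rewrite dot_vec /Z2 /Z3 !trmx_mul !mulmxA.
rewrite -(mulmxA Vzt^T U^T U) hU mulmx1 mxtrace_mulC mulmxA.
by rewrite -trmx_mul h2 linear0 mul0mx linear0.
Qed.
Let X := U *m S *m V^T.
Lemma dX1 : dot (vec Z1) (vec X) = 0.
Proof.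
rewrite dot_vec /Z1 /X !trmx_mul trmxK !mulmxA.
by rewrite -(mulmxA V Uz^T U) hUz mulmx0 !mul0mx linear0.
Qed.
Lemma dX2 : dot (vec Z2) (vec X) = 0.
Proof.
rewrite dot_vec /Z2 /X !trmx_mul !mulmxA.
rewrite -(mulmxA Vzt^T U^T U) hU mulmx1 mxtrace_mulC mulmxA.
by rewrite -trmx_mul h2 linear0 mul0mx linear0.
Qed.
Lemma dX3 : dot (vec Z3) (vec X) = 0.
Proof.
rewrite dot_vec /Z3 /X !trmx_mul trmxK !mulmxA.
rewrite -(mulmxA (V *m Sz^T) U^T U) hU mulmx1 -(mulmxA V Sz^T S) trV.
by rewrite tr_sym h3.
Qed.

Lemma Zdot : dot (vec (Z1 + Z2 + Z3)) (vec (Z1 + Z2 + Z3)) =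
  dot (vec Uz) (vec Uz) + dot (vec Vzt) (vec Vzt) + dot (vec Sz) (vec Sz).
Proof.
rewrite !vecD !(dotDl, dotDr) d11 d22 d33 d12 d13 d23.
rewrite (dotC (vec Z2)) d12 (dotC (vec Z3) (vec Z1)) d13 (dotC (vec Z3) (vec Z2)) d23.
by rewrite !addr0 !add0r.
Qed.

Lemma ZX : dot (vec (Z1 + Z2 + Z3)) (vec X) = 0.
Proof. by rewrite !vecD !dotDl dX1 dX2 dX3 !addr0. Qed.

End Parts.


Lemma Eparts n m r (U : 'M[R]_(n, r)) (V : 'M[R]_(m, r)) (Uz : 'M[R]_(n, r))
  (Vzt : 'M[R]_(r, m)) (Sz : 'M[R]_r) :
  row_mx (row_mx (kron V (1%:M : 'M[R]_n)) (kron (1%:M : 'M[R]_m) U)) (kron V U)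
   *m col_mx (col_mx (vec Uz) (vec Vzt)) (vec Sz)
  = vec (Uz *m V^T + U *m Vzt + U *m Sz *m V^T).
Proof.
by rewrite !mul_row_col !kron_vec mul1mx trmx1 mulmx1 !vecD.
Qed.

Lemma Bparts n m r (U : 'M[R]_(n, r)) (V : 'M[R]_(m, r)) (S : 'M[R]_r) (Uz : 'M[R]_(n, r))
  (Vzt : 'M[R]_(r, m)) (Sz : 'M[R]_r) :
  (block_mx (block_mx (kron (1%:M : 'M[R]_r) U) 0 0 (kron V (1%:M : 'M[R]_r))) 0 0 (vec S))^T
   *m col_mx (col_mx (vec Uz) (vec Vzt)) (vec Sz)
  = col_mx (col_mx (vec (U^T *m Uz)) (vec (Vzt *m V))) ((vec S)^T *m vec Sz).
Proof.
rewrite !tr_block_mx !linear0 !mul_block_col !mul0mx !addr0 !add0r.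
by rewrite !trmx_kron !kron_vec !trmxK trmx1 mulmx1 mul1mx.
Qed.

End H.
Unset Implicit Arguments. Set Strict Implicit. Set Printing Implicit Defensive.
Lemma dot00 (R : rcfType) k : dot (0 : 'cV[R]_k) 0 = 0.
Proof. by rewrite dotE big1 // => i _; rewrite mxE mul0r. Qed.

Theorem mainTheorem4 (R : rcfType) (n m r : nat)
    (A : 'M[R]_(m * n)) (lam : seq R) (Q : 'M[R]_(m * n))
    (X : 'M[R]_(n, m)) (U : 'M[R]_(n, r)) (V : 'M[R]_(m, r)) (s : 'rV[R]_r) :
  (2 <= m * n)%N ->
  A^T = A ->
  (* lam = eigenvalues of A in nondecreasing order *)
  size lam = (m * n)%N -> sorted <=%R lam ->
  Q^T *m Q = 1%:M -> A = Q *m diag_mx (\row_i lam`_i) *m Q^T ->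
  (* thin SVD X = U S V^T and ||vec X|| = 1 *)
  vnorm (vec X) = 1 ->
  U^T *m U = 1%:M -> V^T *m V = 1%:M ->
  (forall i, 0 < s 0 i) ->
  X = U *m diag_mx s *m V^T ->
  let x := vec X in
  let S := diag_mx s in
  let Rx := qform A x in
  let C := A - Rx%:M in
  let E : 'M[R]_(m * n, (r * n + m * r) + r * r) :=
    row_mx (row_mx (kron V (1%:M : 'M[R]_n)) (kron (1%:M : 'M[R]_m) U)) (kron V U) in
  let Cloc := E^T *m C *m E in
  let B : 'M[R]_((r * n + m * r) + r * r, (r * r + r * r) + 1) :=
    block_mx (block_mx (kron (1%:M : 'M[R]_r) U) 0 0 (kron V (1%:M : 'M[R]_r))) 0 0 (vec S) in
  let lam1 := lam`_0 in
  let lam2 := lam`_1 in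
  (forall tau : 'cV[R]_((r * n + m * r) + r * r), tau != 0 -> B^T *m tau = 0 ->
     let z := E *m tau in
     (* (i) *)
     [/\ z != 0, dot z x = 0, vnorm z = vnorm tau, qform Cloc tau = qform C z
       & forall lo hi, is_min_rq C x lo -> is_max_rq C x hi ->
           lo <= qform Cloc tau / dot tau tau <= hi]
     (* (ii) *)
     /\ (lam1 + lam2 - 2 * Rx) * dot tau tau <= qform Cloc tau) /\
  (Rx < (lam1 + lam2) / 2 ->
     (forall tau : 'cV[R]_((r * n + m * r) + r * r), tau != 0 -> B^T *m tau = 0 ->
        0 < qform Cloc tau) /\
     (forall lo hi kappa, is_min_rq C x lo -> is_max_rq C x hi ->
        is_restr_cond ((1%:M - B *m B^T) *m Cloc *m (1%:M - B *m B^T)) B kappa ->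
        kappa <= hi / lo)).
Proof.
move=> mn2 _ sz so hQ hA hxn hU hV spos hX x S Rx C E Cloc B lam1 lam2.
have hx1 : dot x x = 1.
  move: (sqr_sqrtr (dot_ge0 x)); rewrite /vnorm in hxn; rewrite hxn expr1n => h.
  by rewrite -h.
have KF : forall w, dot w x = 0 -> (lam1 + lam2 - 2 * Rx) * dot w w <= qform C w.
  by move=> w hw; apply: (kyfan mn2 sz so hQ hA hx1 hw).
have qfE : forall tau, qform Cloc tau = qform C (E *m tau).
  by move=> tau; rewrite /qform /Cloc trmx_mul !mulmxA.
have P1 : forall tau : 'cV[R]_((r * n + m * r) + r * r), tau != 0 -> B^T *m tau = 0 ->
   dot (E *m tau) x = 0 /\ dot (E *m tau) (E *m tau) = dot tau tau.
  move=> tau tnz hB.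
  pose Uz := (vec_mx (usubmx (usubmx tau))^T : 'M[R]_(r, n))^T.
  pose Vzt := (vec_mx (dsubmx (usubmx tau))^T : 'M[R]_(m, r))^T.
  pose Sz := (vec_mx (dsubmx tau)^T : 'M[R]_(r, r))^T.
  have htau : tau = col_mx (col_mx (vec Uz) (vec Vzt)) (vec Sz).
    by rewrite /Uz /Vzt /Sz -!vec_surj !vsubmxK.
  move: hB; rewrite /B htau Bparts => /eqP; rewrite !col_mx_eq0.
  move=> /andP[/andP[/eqP h1 /eqP h2] /eqP h3].
  have h1' : U^T *m Uz = 0 by apply: vec_inj; rewrite h1 vec0.
  have h2' : Vzt *m V = 0 by apply: vec_inj; rewrite h2 vec0.
  have h3' : \tr (S^T *m Sz) = 0 by rewrite -dot_vec /dot h3 mxE.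
  rewrite /E Eparts /x hX -/S; split.
    exact: ZX.
  by rewrite (Zdot _ hU hV h1' h2') !dot_col.
have RQ : forall tau : 'cV[R]_((r * n + m * r) + r * r), tau != 0 -> B^T *m tau = 0 ->
   forall lo hi, is_min_rq C x lo -> is_max_rq C x hi ->
           lo <= qform Cloc tau / dot tau tau <= hi.
  move=> tau tnz hB lo hi [_ hlo] [_ hhi].
  have [hzx hzz] := P1 tau tnz hB.
  have znz : E *m tau != 0.
    apply/eqP => z0; move: (dot_gt0 tnz); rewrite -hzz z0 dot00 ltxx //.
  by rewrite qfE -hzz hlo ?hhi.
split.
{ move=> tau tnz hB z.
  have [hzx hzz] := P1 tau tnz hB.
  have znz : z != 0.
    apply/eqP => z0; move: (dot_gt0 tnz); rewrite -hzz -/z z0 dot00 ltxx //.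
  split; last by rewrite qfE -hzz KF.
  split => //.
  all: try by rewrite /vnorm hzz.
  all: try by rewrite /z qfE.
  all: by move=> lo hi hl hh; apply: RQ. }
move=> hlt.
have pos : 0 < lam1 + lam2 - 2 * Rx by lra.
split.
  move=> tau tnz hB.
  have [hzx hzz] := P1 tau tnz hB.
  have := KF _ hzx; rewrite hzz -qfE => h.
  have := dot_gt0 tnz => h2; nra.
move=> lo hi kappa hmin hmax [mumin [mumax [e1 e2 hb ->]]].
have lo_pos : 0 < lo.
  case: hmin => [[z0 /andP[z0nz /eqP z0x] <-] _].
  have := KF _ z0x; have := dot_gt0 z0nz => h1 h2.
  apply: divr_gt0 => //; nra.
pose P := (1%:M - B *m B^T).
have Reig : forall mu, restr_eig (P *m Cloc *m P) B mu -> lo <= mu <= hi.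
  move=> mu [t /andP[tnz /eqP hB] het].
  have Pt : P *m t = t by rewrite /P mulmxBl mul1mx -mulmxA hB mulmx0 subr0.
  have PT : P^T = P by rewrite /P linearB /= trmx1 trmx_mul trmxK.
  have e : qform Cloc t = mu * dot t t.
    transitivity (qform (P *m Cloc *m P) t).
      by rewrite /qform -!mulmxA Pt !mulmxA -[t^T *m P]trmxK trmx_mul PT trmxK Pt.
    by rewrite /qform -mulmxA het -scalemxAr mxE.
  have := RQ t tnz hB lo hi hmin hmax.
  by rewrite e mulfK // (lt0r_neq0 (dot_gt0 tnz)).
have [/andP[l1 _]] := Reig _ e1.
have [/andP[_ h2]] := Reig _ e2.
rewrite ler_pdivrMr; last by apply: lt_le_trans l1.
have q0 : 0 <= hi / lo.
  have := Reig _ e2 => /andP[a b]; apply: divr_ge0; lra.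
have : hi / lo * lo = hi by rewrite divfK // lt0r_neq0.
nra.
Qed.
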